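(* Let $\phi(x,y)=\lambda(x,y)\alpha(x,y)-\beta(x,y)$ be the Riley polynomial of $K_2=K(17,7)$ (the case $l=2$). Then for every $n\geq 5$, $\phi(2\cos(\pi/n),y)$ has a real root $y_n>2$.
   Context: $\lambda(x,y)=9x^2-12x^4+4x^6-5y+10x^2y+2x^4y-4x^6y-11x^2y^2+8x^4y^2+x^6y^2+5y^3-4x^2y^3-3x^4y^3+3x^2y^4-y^5$, $\alpha(x,y)=1-4x^2+2x^4+2y-x^2y-x^4y-y^2+2x^2y^2-y^3$, $\beta(x,y)=-1+x^2-y$. $K(p,q)$ is the two-bridge knot with fraction $p/q$. *)

(* Defs.v *)
From Stdlib Require Import Reals.
Open Scope R_scope.

Definition lambda_K (x y : R) : R :=
  9*x^2 - 12*x^4 + 4*x^6 - 5*y + 10*x^2*y + 2*x^4*y - 4*x^6*y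
  - 11*x^2*y^2 + 8*x^4*y^2 + x^6*y^2 + 5*y^3 - 4*x^2*y^3
  - 3*x^4*y^3 + 3*x^2*y^4 - y^5.

Definition alpha_K (x y : R) : R :=
  1 - 4*x^2 + 2*x^4 + 2*y - x^2*y - x^4*y - y^2 + 2*x^2*y^2 - y^3.

Definition beta_K (x y : R) : R := -1 + x^2 - y.

Definition phi_K (x y : R) : R := lambda_K x y * alpha_K x y - beta_K x y.

(* Main.v *)
Require Import Defs.
From Stdlib Require Import Reals.
From Stdlib Require Import Lra Psatz.
Open Scope R_scope.

Lemma phi_cont (x : R) : continuity (fun y => phi_K x y).
Proof. unfold phi_K, lambda_K, alpha_K, beta_K. reg. Qed.

Lemma phi_at_10 (x : R) : 2 <= x^2 <= 4 -> 0 < phi_K x 10.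
Proof.
  intros [H1 H2].
  assert (El : lambda_K x 10 = -95050 + 25009 * x^2 - 2192 * (x^2)^2 + 64 * (x^2)^3)
    by (unfold lambda_K; ring).
  assert (Ea : alpha_K x 10 = -1079 + 186 * x^2 - 8 * (x^2)^2) by (unfold alpha_K; ring).
  set (t := x^2) in *.
  assert (Hl : lambda_K x 10 < 0) by (rewrite El; nra).
  assert (Ha : alpha_K x 10 < 0) by (rewrite Ea; nra).
  unfold phi_K, beta_K. fold t. nra.
Qed.

Lemma root_from (x y0 : R) : 2 <= x^2 <= 4 -> 2 <= y0 < 10 -> phi_K x y0 < 0 ->
  exists y, y > 2 /\ phi_K x y = 0.
Proof.
  intros Ht Hy H0.
  destruct (IVT (fun y => phi_K x y) y0 10 (phi_cont x)) as [z [Hz Hz0]];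
    try lra; try (apply phi_at_10; exact Ht).
  exists z; split; [|exact Hz0].
  destruct (Req_dec z y0) as [E|E]; [subst; lra | lra].
Qed.

Theorem proposition6p10 :
  forall n : nat, (5 <= n)%nat ->
    exists y : R, y > 2 /\ phi_K (2 * cos (PI / INR n)) y = 0.
Proof.
  intros n Hn.
  assert (Hn5 : 5 <= INR n) by (replace 5 with (INR 5) by (simpl; ring); apply le_INR; exact Hn).
  assert (HPI := PI_RGT_0). assert (HPI4 := PI_4). assert (HPI2 := PI2_1).
  (* PI < 3.3 via sin(PI/6) = 1/2 *)
  assert (HPIub : PI <= 33/10).
  { destruct (sin_bound (PI/6) 0) as [Hs _]; try lra.
    rewrite sin_PI6 in Hs. simpl in Hs. unfold sin_approx in Hs. simpl in Hs.
    unfold sin_term in Hs. simpl in Hs.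
    set (p := PI) in *.
    assert (Hp : p / 6 * (p/6) * (p/6) <= 64/216) by (unfold Rdiv; nra).
    nra. }
  set (a := PI / INR n).
  assert (Ha0 : 0 < a) by (unfold a; apply Rdiv_lt_0_compat; lra).
  assert (Ha1 : a <= 33/50).
  { unfold a. apply (Rmult_le_reg_r (INR n)); [lra|].
    unfold Rdiv; rewrite Rmult_assoc, Rinv_l by lra. nra. }
  assert (Hc : 1 - a^2/2 <= cos a).
  { assert (H : cos_approx a (2*0+1) <= cos a) by (destruct (cos_bound a 0) as [H1 _]; [lra|lra|exact H1]).
    simpl in H. unfold cos_approx in H. simpl in H. unfold cos_term in H. simpl in H.
    lra. }
  assert (Hc1 := COS_bound a). 
  set (x := 2 * cos a).
  assert (Ht : 2 <= x^2 <= 4).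
  { unfold x. split; nra. }
  destruct (Rle_lt_dec (x^2) 3) as [Hle|Hgt].
  - apply (root_from x 2); [exact Ht | lra |].
    assert (E : phi_K x 2 = 2 * (x^2)^2 - 12 * x^2 + 17) by (unfold phi_K, lambda_K, alpha_K, beta_K; ring).
    rewrite E.
    assert (Hca : 78/100 <= cos a) by nra.
    assert (Hlo : 2.4 <= x^2) by (unfold x; nra).
    nra.
  - apply (root_from x (x^2 - 1)); [exact Ht | lra |].
    assert (E : phi_K x (x^2-1) = -1) by (unfold phi_K, lambda_K, alpha_K, beta_K; ring).
    rewrite E; lra.
Qed.
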